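(* For every $(x,a)\in H\times\mathcal{A}$, $Q^{\delta,\mathscr{P}}_{\pi}(x,a)$ equals the optimal value of the convex program \[ \inf_{\lambda\ge0,\ h:\mathcal{X}\to\mathbb{R}}\ \Big(\lambda\delta+\sum_{y\in\mathcal{X}}h(y)P_{x,a}(y)\Big) \] subject to \[ \max_{l\in\mathcal{X}}\Big(-\lambda|l-y|+c(x,a,l)+\sum_{a'\in\mathcal{A}}Q^{\delta,\mathscr{P}}_{\pi}(l,a')\pi(a'|l)\Big)\le h(y)\quad\text{for all }y\in\mathcal{X}, \] where $c(x,a,l)=1$ if $l\in U$ and $c(x,a,l)=0$ otherwise.
   Context: Consider a Markov decision process with a finite state set $\mathcal{X}$, viewed as a subset of $\mathbb{R}$ (so $|y-z|$ is the distance between states), and a finite action set $\mathcal{A}$. The state set is partitioned into a goal set $E$, a forbidden (unsafe) set $U$, and $H:=\mathcal{X}\setminus(E\cup U)$; $E$ and $U$ are terminal (the process stops there). For each $(x,a)\in H\times\mathcal{A}$ a nominal transition probability $\mathcal{P}_{x,a}=\{P_{x,a}(y)\}_{y\in\mathcal{X}}$ on $\mathcal{X}$ is given, and $\mathscr{P}=\{\mathcal{P}_{x,a}\}_{(x,a)\in H\times\mathcal{A}}$; transition probabilities are time-invariant. The sample space is $\Omega=(\mathcal{X}\times\mathcal{A})^{\infty}$ with coordinate processes $X_t,A_t$. A stationary policy is $\pi:\mathcal{X}\to\mathscr{M}(\mathcal{A})$, written $\pi(a|x)$. For any collection $\tilde{\mathscr{P}}=\{\tilde{\mathcal{P}}_{x,a}\}_{(x,a)\in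 H\times\mathcal{A}}$ of transition probabilities, $\mathbb{E}^{\tilde{\mathscr{P}}}_{\pi}$ denotes expectation for the process with $X_{t+1}\sim\tilde{\mathcal{P}}_{X_t,A_t}$ and $A_t\sim\pi(\cdot|X_t)$ (except when $A_0$ is conditioned on). For $S\subseteq\mathcal{X}$, $\tau_S$ is the first hitting time of $S$, and $\tau=\tau_{E\cup U}$. The 1-Wasserstein distance between probability measures $\mu,\nu$ on $\mathcal{X}$ is $W(\mu,\nu)=\min\{\sum_{(y,z)}\Gamma(y,z)|y-z| : \Gamma\in\mathscr{M}(\mathcal{X}\times\mathcal{X}),\ \sum_z\Gamma(y,z)=\mu(y),\ \sum_y\Gamma(y,z)=\nu(z)\}$. For $\delta\ge0$, $\mathcal{D}^{\delta}_{x,a}=\{\tilde{\mathcal{P}}_{x,a}\in\mathscr{M}(\mathcal{X}): W(\tilde{\mathcal{P}}_{x,a},\mathcal{P}_{x,a})\le\delta\}$ and $\mathscr{D}^{\delta}=\prod_{(x,a)\in H\times\mathcal{A}}\mathcal{D}^{\delta}_{x,a}$. The robust Q-function is $Q^{\delta,\mathscr{P}}_{\pi}(x,a)=\sup_{\tilde{\mathscr{P}}\in\mathscr{D}^{\delta}}\mathbb{E}^{\tilde{\mathscr{P}}}_{\pi}\big[\sum_{t=0}^{\tau-1}c_{t+1}\mid X_0=x,A_0=a\big]$, where $c_{t+1}=1$ if $X_{t+1}\in U$ and $0$ otherwise; by the same formula (empty sum, since $\tau=0$), $Q^{\delta,\mathscr{P}}_{\pi}(l,a')=0$ for terminal states $l\in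 E\cup U$. *)

(* Defs.v *)
From HB Require Import structures.
From mathcomp Require Import all_boot all_order all_algebra.
From mathcomp Require Import all_classical all_reals ereal.
Set Implicit Arguments. Unset Strict Implicit. Unset Printing Implicit Defensive.
Import Order.TTheory GRing.Theory Num.Theory.
Local Open Scope ring_scope.
Local Open Scope classical_set_scope.

Section RobustMDP.
Variables (R : realType) (X A : finType).

Definition isDist (T : finType) (p : T -> R) : Prop :=
  (forall y, 0 <= p y) /\ \sum_(y : T) p y = 1.

Definition isCoupling (mu nu : X -> R) (G : X -> X -> R) : Prop :=
  (forall y z, 0 <= G y z) /\
  (forall y, \sum_(z : X) G y z = mu y) /\
  (forall z, \sum_(y : X) G y z = nu z).

(* 1-Wasserstein distance, states located on the real line via loc *)
Definition Wass (loc : X -> R) (mu nu : X -> R) : R :=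
  inf [set r : R | exists G, isCoupling mu nu G /\
                    r = \sum_(y : X) \sum_(z : X) G y z * `|loc y - loc z| ].

(* non-terminal states H = X \ (E u U) *)
Definition Hset (E U : {set X}) : {set X} := ~: (E :|: U).

Definition cost (U : {set X}) (l : X) : R := if l \in U then 1 else 0.

Definition admissible (loc : X -> R) (E U : {set X}) (P : X -> A -> X -> R)
  (delta : R) (Pt : X -> A -> X -> R) : Prop :=
  forall x a, x \in Hset E U -> isDist (Pt x a) /\ Wass loc (Pt x a) (P x a) <= delta.

(* Vn Pt n x a = E^{Pt}_pi [ sum_{t=0}^{min(tau,n)-1} c_{t+1} | X_0 = x, A_0 = a ]
   for x in H (process stopped on E u U). *)
Fixpoint Vn (E U : {set X}) (pi : X -> A -> R) (Pt : X -> A -> X -> R)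
  (n : nat) (x : X) (a : A) : R :=
  match n with
  | 0 => 0
  | n'.+1 => \sum_(y : X) Pt x a y *
       (cost U y + (if y \in Hset E U
                    then \sum_(a' : A) pi y a' * Vn E U pi Pt n' y a' else 0))
  end.

(* Robust Q-function: sup over admissible Pt of the expected accumulated cost
   E[sum_{t=0}^{tau-1} c_{t+1}] = sup_n (monotone limit of) Vn; 0 on terminal states. *)
Definition Qrob (loc : X -> R) (E U : {set X}) (P : X -> A -> X -> R)
  (pi : X -> A -> R) (delta : R) (x : X) (a : A) : \bar R :=
  if x \in Hset E U then
    ereal_sup [set r : \bar R | exists Pt n, admissible loc E U P delta Pt /\
                                 r = (Vn E U pi Pt n x a)%:E]
  else 0%E.

Definition dualValue (loc : X -> R) (E U : {set X}) (P : X -> A -> X -> R)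
  (pi : X -> A -> R) (delta : R) (x : X) (a : A) : \bar R :=
  ereal_inf [set r : \bar R | exists (lam : R) (h : X -> R),
     0 <= lam /\
     (forall y l : X,
        ((- lam * `|loc l - loc y| + cost U l)%:E
          + \sum_(a' : A) (Qrob loc E U P pi delta l a' * (pi l a')%:E))%E
        <= (h y)%:E)%E /\
     r = (lam * delta + \sum_(y : X) h y * P x a y)%:E].

End RobustMDP.

(* Main.v *)
Require Import Defs.
From HB Require Import structures.
From mathcomp Require Import all_boot all_order all_algebra.
From mathcomp Require Import all_classical all_reals ereal.
From mathcomp Require Import ring lra.
Import Order.TTheory GRing.Theory Num.Theory.
Local Open Scope ring_scope.
Local Open Scope classical_set_scope.

Lemma exmax (R : realType) (I : finType) (P : pred I) (F : I -> R) i0 :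
  P i0 -> exists i, P i /\ forall j, P j -> F j <= F i.
Proof.
move=> Pi0; case: (@arg_maxP _ _ I i0 P F Pi0) => i Pi H.
by exists i; split.
Qed.

Lemma mix2D (R : realType) (I : finType) (C F : I -> R) (delta : R) i0 :
  C i0 <= delta ->
  exists i j (th lam : R), 0 <= th <= 1 /\ th * C i + (1 - th) * C j <= delta /\
    0 <= lam /\ forall k, F k <= th * F i + (1 - th) * F j + lam * (C k - delta).
Proof.
move=> Ci0.
pose th (k : I * I) : R := if delta < C k.2 then (C k.2 - delta) / (C k.2 - C k.1) else 1.
pose val (k : I * I) : R := th k * F k.1 + (1 - th k) * F k.2.
have [k [Pk Hk]] := @exmax R _ (fun k : I * I => C k.1 <= delta) val (i0, i0) Ci0.
pose v := val k.
have vF : forall i, C i <= delta -> F i <= v.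
  move=> i Ci; have := Hk (i, i) Ci; rewrite /val /th /= ltNge Ci /=.
  by rewrite subrr mul0r addr0 mul1r.
have vmix : forall i j, C i <= delta -> delta < C j ->
   F i * (C j - delta) + F j * (delta - C i) <= v * (C j - C i).
  move=> i j Ci Cj; have := Hk (i, j) Ci; rewrite /val /th /= Cj.
  have hpos : 0 < C j - C i by lra.
  rewrite -(ler_pM2r hpos) => H; apply: le_trans H; rewrite le_eqVlt; apply/orP; left; apply/eqP.
  field; lra.
pose g j := if delta < C j then (F j - v) / (C j - delta) else 0.
have [js [_ Hjs]] := @exmax R _ predT g i0 isT.
pose lam := if 0 < g js then g js else 0.
exists k.1, k.2, (th k), lam; split.
  rewrite /th; case: ifP => h; last by lra.
  have hpos : 0 < C k.2 - C k.1 by lra.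
  by apply/andP; split; [apply: divr_ge0; lra | rewrite ler_pdivrMr //; lra].
split.
  rewrite /th; case: ifP => h; last by lra.
  have hpos : 0 < C k.2 - C k.1 by lra.
  rewrite le_eqVlt; apply/orP; left; apply/eqP; field; lra.
split; first by rewrite /lam; case: ifP => h //; lra.
move=> kk; rewrite -/(val k) -/v.
have [hk|hk] := ltP delta (C kk).
  have : g kk <= lam.
    apply: le_trans (Hjs kk isT) _; rewrite /lam; case: ifP => //; lra.
  rewrite /g hk ler_pdivrMr; last by lra.
  lra.
rewrite /lam; case: ifP => hg; last by have := vF kk hk; lra.
have hjs : delta < C js by move: hg; rewrite /g; case: ifP => //; lra.
have e : g js * (C js - delta) = F js - v by rewrite /g hjs; field; lra.
have := vmix kk js hk hjs.
nra.
Qed.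

Section Main.
Variables (R : realType) (X A : finType) (loc : X -> R)
  (E U : {set X}) (P : X -> A -> X -> R) (pi : X -> A -> R) (delta : R).
Hypotheses (hd : 0 <= delta)
  (hP : forall x a, x \in Hset E U -> isDist (P x a))
  (hpi : forall x, isDist (pi x)).

Local Notation H := (Hset E U).
Definition dd (l y : X) : R := `|loc l - loc y|.
Definition Dset x a (p : X -> R) := isDist p /\ Wass loc p (P x a) <= delta.
Definition ccost (G : X -> X -> R) : R := \sum_(y : X) \sum_(z : X) G y z * dd y z.

Lemma dd_ge0 l y : 0 <= dd l y. Proof. exact: normr_ge0. Qed.
Lemma dd_xx y : dd y y = 0. Proof. by rewrite /dd subrr normr0. Qed.

Lemma ccost_ge0 G : (forall y z, 0 <= G y z) -> 0 <= ccost G.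
Proof.
move=> hG; apply: sumr_ge0 => y _; apply: sumr_ge0 => z _.
by apply: mulr_ge0 => //; exact: dd_ge0.
Qed.

Lemma Wass_le mu nu G : isCoupling mu nu G -> Wass loc mu nu <= ccost G.
Proof.
move=> cG; rewrite /Wass; apply: ge_inf; last by exists G.
exists 0 => r [G' [[hG' _] ->]]; exact: ccost_ge0.
Qed.

Lemma Wass_adh mu nu e : isDist mu -> isDist nu -> 0 < e ->
  exists G, isCoupling mu nu G /\ ccost G < Wass loc mu nu + e.
Proof.
move=> [m0 m1] [n0 n1] e0.
rewrite /Wass; set S := (X in inf X).
have hS : has_inf S.
  split.
    exists (ccost (fun y z => mu y * nu z)), (fun y z => mu y * nu z); split => //.
    split; first by move=> y z; apply: mulr_ge0.
    split; first by move=> y; rewrite -mulr_sumr n1 mulr1.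
    by move=> z; rewrite -mulr_suml m1 mul1r.
  exists 0 => r [G' [[hG' _] ->]]; exact: ccost_ge0.
have [r [G [cG ->]] hr] := inf_adherent e0 hS.
by exists G.
Qed.

Lemma Dset_P x a : x \in H -> Dset x a (P x a).
Proof.
move=> xH; split; first exact: hP.
apply: le_trans hd; apply: le_trans (@Wass_le _ _ (fun y z => if y == z then P x a y else 0) _) _.
  have [p0 p1] := hP x a xH.
  split; first by move=> y z; case: eqP.
  split.
    by move=> y; rewrite (bigD1 y) //= eqxx big1 ?addr0 // => z /negbTE; rewrite eq_sym => ->.
  by move=> z; rewrite (bigD1 z) //= eqxx big1 ?addr0 // => y /negbTE ->.
rewrite le_eqVlt; apply/orP; left; apply/eqP.
apply: big1 => y _; apply: big1 => z _; case: eqP => [->|_]; last by rewrite mul0r.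
by rewrite dd_xx mulr0.
Qed.


Lemma weak_dual x a p (f h : X -> R) lam : x \in H -> Dset x a p -> 0 <= lam ->
  (forall l y, f l - lam * dd l y <= h y) ->
  \sum_l p l * f l <= lam * delta + \sum_y h y * P x a y.
Proof.
move=> xH [pD pW] l0 hf.
apply/ler_addgt0Pr => e e0.
have e' : 0 < e / (lam + 1) by apply: divr_gt0 => //; lra.
have [G [[G0 [Grow Gcol]] Gc]] := @Wass_adh p (P x a) _ pD (hP x a xH) e'.
have -> : \sum_l p l * f l = \sum_l \sum_y G l y * f l.
  by apply: eq_bigr => l _; rewrite -Grow mulr_suml.
have step : \sum_l \sum_y G l y * f l <= \sum_l \sum_y G l y * (h y + lam * dd l y).
  apply: ler_sum => l _; apply: ler_sum => y _; apply: ler_wpM2l => //.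
  by have := hf l y; lra.
apply: le_trans step _.
have -> : \sum_l \sum_y G l y * (h y + lam * dd l y) =
   \sum_y h y * P x a y + lam * ccost G.
  rewrite /ccost mulr_sumr -[X in _ = X + _](_ : \sum_l \sum_y G l y * h y = _); last first.
    rewrite exchange_big /=; apply: eq_bigr => y _.
    by rewrite -Gcol mulr_sumr; apply: eq_bigr => l _; rewrite mulrC.
  rewrite -big_split /=; apply: eq_bigr => l _.
  rewrite mulr_sumr -big_split /=; apply: eq_bigr => y _; ring.
have hlc : lam * ccost G <= lam * delta + e.
  have hc : ccost G <= delta + e / (lam + 1) by lra.
  apply: le_trans (ler_wpM2l l0 hc) _.
  rewrite mulrDr lerD2l.
  rewrite mulrA ler_pdivrMr; last by lra.
  nra.
lra.
Qed.


Definition Gb (b : R) (h : X -> A -> R) (y : X) : R :=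
  cost R U y + (if y \in H then b * \sum_a' pi y a' * h y a' else 0).
Definition Lp b h (p : X -> R) := \sum_y p y * Gb b h y.

Lemma Vn_S Pt n x a : Vn E U pi Pt n.+1 x a = Lp 1 (Vn E U pi Pt n) (Pt x a).
Proof. by rewrite /= /Lp /Gb; apply: eq_bigr => y _; rewrite mul1r. Qed.

Lemma cost_H y : y \in H -> cost R U y = 0.
Proof.
rewrite /Hset finset.in_setC finset.in_setU negb_or => /andP [_ /negbTE h].
by rewrite /cost h.
Qed.

Lemma cost_b y : 0 <= cost R U y <= 1.
Proof. by rewrite /cost; case: ifP => _; rewrite ?lexx ?ler01. Qed.

Lemma sum_pi_b y (h : A -> R) : (forall a', 0 <= h a' <= 1) ->
  0 <= \sum_a' pi y a' * h a' <= 1.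
Proof.
move=> hh; have [p0 p1] := hpi y; apply/andP; split.
  by apply: sumr_ge0 => a' _; apply: mulr_ge0 => //; case/andP: (hh a').
rewrite -p1; apply: ler_sum => a' _; rewrite -[leRHS]mulr1; apply: ler_wpM2l => //.
by case/andP: (hh a').
Qed.

Lemma Gb_b b h y : 0 <= b <= 1 -> (y \in H -> forall a', 0 <= h y a' <= 1) ->
  0 <= Gb b h y <= 1.
Proof.
move=> /andP [b0 b1] hh; rewrite /Gb; case: ifP => yH.
  rewrite cost_H // add0r; have /andP [s0 s1] := @sum_pi_b y (h y) (hh yH).
  apply/andP; split; first exact: mulr_ge0.
  by rewrite -[1]mulr1; apply: ler_pM.
by rewrite addr0; exact: cost_b.
Qed.

Lemma Lp_b b h p : isDist p -> 0 <= b <= 1 ->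
  (forall y a', y \in H -> 0 <= h y a' <= 1) -> 0 <= Lp b h p <= 1.
Proof.
move=> [p0 p1] hb hh; rewrite /Lp; apply/andP; split.
  apply: sumr_ge0 => y _; apply: mulr_ge0 => //.
  by case/andP: (@Gb_b b h y hb (fun yH a' => hh y a' yH)).
rewrite -p1; apply: ler_sum => y _; rewrite -[leRHS]mulr1; apply: ler_wpM2l => //.
by case/andP: (@Gb_b b h y hb (fun yH a' => hh y a' yH)).
Qed.

Lemma LpLe b h h' p e : isDist p -> 0 <= b -> 0 <= e ->
  (forall y a', y \in H -> h y a' <= h' y a' + e) -> Lp b h p <= Lp b h' p + b * e.
Proof.
move=> [p0 p1] b0 e0 hh.
have hG : forall y, Gb b h y <= Gb b h' y + b * e.
  move=> y; rewrite /Gb; case: ifP => yH; last by rewrite lerDl; exact: mulr_ge0.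
  rewrite -addrA lerD2l -mulrDr; apply: ler_wpM2l => //.
  have -> : \sum_a' pi y a' * h' y a' + e = \sum_a' pi y a' * (h' y a' + e).
    have [q0 q1] := hpi y.
    symmetry; rewrite (eq_bigr (fun a' => pi y a' * h' y a' + pi y a' * e)); last by move=> *; rewrite mulrDr.
    by rewrite big_split /= -mulr_suml q1 mul1r.
  apply: ler_sum => a' _; apply: ler_wpM2l; first by case: (hpi y).
  exact: hh.
rewrite /Lp; apply: le_trans (_ : _ <= \sum_y p y * (Gb b h' y + b * e)) _.
  by apply: ler_sum => y _; apply: ler_wpM2l.
rewrite (eq_bigr (fun y => p y * Gb b h' y + p y * (b * e))); last by move=> *; rewrite mulrDr.
by rewrite big_split /= -mulr_suml p1 mul1r.
Qed.

Lemma Lp_mono_b b b' h p : isDist p -> 0 <= b -> b <= b' ->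
  (forall y a', y \in H -> 0 <= h y a') -> Lp b h p <= Lp b' h p.
Proof.
move=> [p0 p1] b0 bb hh; rewrite /Lp; apply: ler_sum => y _; apply: ler_wpM2l => //.
rewrite /Gb; case: ifP => yH //; rewrite lerD2l; apply: ler_wpM2r => //.
apply: sumr_ge0 => a' _; apply: mulr_ge0; [by case: (hpi y) | exact: hh].
Qed.

Lemma Lp_scale b al h p : isDist p -> 0 <= b <= 1 -> 0 <= al <= 1 ->
  (forall y a', y \in H -> 0 <= h y a') ->
  b * al * Lp 1 h p <= Lp b (fun y a' => al * h y a') p.
Proof.
move=> [p0 p1] /andP [b0 b1] /andP [a0 a1] hh; rewrite /Lp mulr_sumr.
apply: ler_sum => y _; rewrite mulrCA; apply: ler_wpM2l => //.
rewrite /Gb; have /andP [c0 c1] := cost_b y; case: ifP => yH.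
  have -> : \sum_a' pi y a' * (al * h y a') = al * \sum_a' pi y a' * h y a'.
    by rewrite mulr_sumr; apply: eq_bigr => a' _; ring.
  have : 0 <= \sum_a' pi y a' * h y a'.
    by apply: sumr_ge0 => a' _; apply: mulr_ge0; [by case: (hpi y) | exact: hh].
  have : b * al <= 1 by rewrite -[1]mulr1; apply: ler_pM.
  have : 0 <= b * al by apply: mulr_ge0.
  nra.
have : b * al <= 1 by rewrite -[1]mulr1; apply: ler_pM.
nra.
Qed.

Lemma Vn_b Pt n : (forall x a, x \in H -> isDist (Pt x a)) ->
  forall y a', y \in H -> 0 <= Vn E U pi Pt n y a' <= 1.
Proof.
move=> hPt; elim: n => [|n IH] y a' yH; first by rewrite /= lexx ler01.
by rewrite Vn_S; apply: Lp_b => //; [exact: hPt | rewrite ler01 lexx].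
Qed.


Definition Tset b h x a := [set r : R | exists p, Dset x a p /\ r = Lp b h p].
Definition T b h x a := sup (Tset b h x a).

Section Tprops.
Variables (b : R) (h : X -> A -> R) (x : X) (a : A).
Hypotheses (xH : x \in H) (hb : 0 <= b <= 1)
  (hh : forall y a', y \in H -> 0 <= h y a' <= 1).

Lemma T_has : has_sup (Tset b h x a).
Proof.
split; first by exists (Lp b h (P x a)), (P x a); split => //; exact: Dset_P.
exists 1 => r [p [[pD _] ->]]; by case/andP: (@Lp_b b h p pD hb hh).
Qed.

Lemma T_ub p : Dset x a p -> Lp b h p <= T b h x a.
Proof. by move=> pD; apply: (sup_upper_bound T_has); exists p. Qed.

Lemma T_adh e : 0 < e -> exists p, Dset x a p /\ T b h x a - e < Lp b h p.
Proof.
move=> e0; have [r [p [pD ->]] hr] := sup_adherent e0 T_has.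
by exists p.
Qed.

Lemma T_le c : (forall p, Dset x a p -> Lp b h p <= c) -> T b h x a <= c.
Proof.
move=> hc; apply: ge_sup; first by exists (Lp b h (P x a)), (P x a); split => //; exact: Dset_P.
by move=> r [p [pD ->]]; apply: hc.
Qed.

Lemma T_b : 0 <= T b h x a <= 1.
Proof.
apply/andP; split.
  apply: (le_trans _ (@T_ub (P x a) (@Dset_P x a xH))).
  by case/andP: (@Lp_b b h (P x a) (hP x a xH) hb hh).
by apply: T_le => p [pD _]; case/andP: (@Lp_b b h p pD hb hh).
Qed.
End Tprops.

Lemma T_mono b h h' x a : x \in H -> 0 <= b <= 1 ->
  (forall y a', y \in H -> 0 <= h' y a' <= 1) ->
  (forall y a', y \in H -> h y a' <= h' y a') -> T b h x a <= T b h' x a.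
Proof.
move=> xH hb hh' hle; apply: T_le => // p pD.
apply: le_trans (@T_ub b h' x a xH hb hh' p pD).
have := @LpLe b h h' p 0 (proj1 pD) (proj1 (andP hb)) (lexx 0).
rewrite mulr0 addr0; apply => y a' yH; rewrite addr0; exact: hle.
Qed.

Definition Sset x a := [set r : R | exists Pt n,
  admissible loc E U P delta Pt /\ r = Vn E U pi Pt n x a].
Definition q x a := if x \in H then sup (Sset x a) else 0.

Lemma adm_dist Pt : admissible loc E U P delta Pt ->
  forall x a, x \in H -> isDist (Pt x a).
Proof. by move=> hPt x a xH; case: (hPt x a xH). Qed.

Lemma adm_P : admissible loc E U P delta P.
Proof. by move=> x a xH; exact: Dset_P. Qed.

Lemma S_has x a : x \in H -> has_sup (Sset x a).
Proof.
move=> xH; split; first by exists 0, P, 0%N; split => //; exact: adm_P.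
exists 1 => r [Pt [n [hPt ->]]].
by case/andP: (@Vn_b Pt n (@adm_dist Pt hPt) x a xH).
Qed.

Lemma q_ub x a Pt n : x \in H -> admissible loc E U P delta Pt ->
  Vn E U pi Pt n x a <= q x a.
Proof.
move=> xH hPt; rewrite /q xH; apply: (sup_upper_bound (@S_has x a xH)).
by exists Pt, n.
Qed.

Lemma q_adh x a e : x \in H -> 0 < e -> exists Pt n,
  admissible loc E U P delta Pt /\ q x a - e < Vn E U pi Pt n x a.
Proof.
move=> xH e0; have [r [Pt [n [hPt ->]]] hr] := sup_adherent e0 (@S_has x a xH).
by exists Pt, n; rewrite /q xH.
Qed.

Lemma q_b y a' : 0 <= q y a' <= 1.
Proof.
case yH : (y \in H); last by rewrite /q yH lexx ler01.
apply/andP; split; first by have := @q_ub y a' P 0%N yH adm_P.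
rewrite /q yH; apply: ge_sup; first by exists 0, P, 0%N; split => //; exact: adm_P.
by move=> r [Pt [n [hPt ->]]]; case/andP: (@Vn_b Pt n (@adm_dist Pt hPt) y a' yH).
Qed.

Lemma Qrob_q x a : Qrob loc E U P pi delta x a = (q x a)%:E.
Proof.
rewrite /Qrob /q; case: ifP => xH //.
have -> : [set r : \bar R | exists Pt n, admissible loc E U P delta Pt /\
          r = (Vn E U pi Pt n x a)%:E] = EFin @` Sset x a.
  apply/seteqP; split => r.
    by move=> [Pt [n [hPt ->]]]; exists (Vn E U pi Pt n x a) => //; exists Pt, n.
  by move=> [s [Pt [n [hPt ->]]] <-]; exists Pt, n.
by case: (@S_has x a xH) => h1 h2; rewrite ereal_sup_EFin.
Qed.


Lemma pow_small (b e : R) : 0 <= b -> b < 1 -> 0 < e -> exists m : nat, b ^+ m <= e.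
Proof.
move=> b0 b1 e0; have [->|bn0] := eqVneq b 0.
  by exists 1%N; rewrite expr1; apply: ltW.
have bp : 0 < b by rewrite lt_def bn0 b0.
pose g := b^-1 - 1.
have gp : 0 < g by rewrite /g subr_gt0 invf_gt1.
have bern : forall m : nat, 1 + m%:R * g <= (1 + g) ^+ m.
  elim=> [|m IH]; first by rewrite mul0r addr0 expr0.
  rewrite exprS -addn1 natrD.
  have : 0 <= (1 + g) ^+ m by apply: exprn_ge0; lra.
  have : 0 <= m%:R :> R by apply: ler0n.
  nra.
have e1 : forall m : nat, b ^+ m * (1 + g) ^+ m = 1.
  by move=> m; rewrite -exprMn /g addrC subrK divff // expr1n.
pose m := Num.Def.archi_bound ((e * g)^-1).
have hm : (e * g)^-1 < m%:R by apply: archi_boundP; rewrite invr_ge0; apply: mulr_ge0; lra.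
have hm' : 1 < m%:R * (e * g).
  have egp : 0 < e * g by apply: mulr_gt0.
  have := mulVf (lt0r_neq0 egp); nra.
exists m.
have hb : 0 <= b ^+ m by apply: exprn_ge0.
have h1 : b ^+ m * (1 + m%:R * g) <= 1.
  by rewrite -[leRHS](e1 m); apply: ler_wpM2l => //; exact: bern.
have h2 : 0 < m%:R * g.
  have : 0 < m%:R * g * e by rewrite -mulrA (mulrC g); lra.
  by rewrite pmulr_lgt0.
rewrite leNgt; apply/negP => he.
have : e * (m%:R * g) < b ^+ m * (m%:R * g) by rewrite ltr_pM2r.
nra.
Qed.

Lemma bern2 (x : R) (k : nat) : 0 <= x -> x <= 1 -> 1 - k%:R * x <= (1 - x) ^+ k.
Proof.
move=> x0 x1; elim: k => [|k IH]; first by rewrite mul0r subr0 expr0.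
rewrite exprS -addn1 natrD.
have : 0 <= (1 - x) ^+ k by apply: exprn_ge0; lra.
have : 0 <= k%:R :> R by apply: ler0n.
nra.
Qed.

Lemma disc_le b g : 0 <= b -> b < 1 ->
  (forall y a', y \in H -> 0 <= g y a' <= 1) ->
  (forall y a', y \in H -> g y a' <= T b g y a') ->
  forall x a, x \in H -> g x a <= q x a.
Proof.
move=> b0 b1 hg hT x0 a0 x0H; apply/ler_addgt0Pr => e e0.
have hb : 0 <= b <= 1 by rewrite b0 ltW.
pose eta := e * (1 - b) / 2.
have eta0 : 0 < eta by rewrite /eta; apply: divr_gt0 => //; apply: mulr_gt0 => //; lra.
have etaE : eta / (1 - b) = e / 2 by rewrite /eta; field; lra.
have hch : forall xa : X * A, exists p, xa.1 \in H ->
    Dset xa.1 xa.2 p /\ g xa.1 xa.2 - eta < Lp b g p.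
  move=> [x a] /=; case xH: (x \in H); last by exists (P x a).
  have [p [pD hp]] := @T_adh b g x a xH hb hg eta eta0.
  exists p => _; split => //; have := hT x a xH; lra.
have [ch hch'] := choice hch.
pose Pt x a := ch (x, a).
have hPt : admissible loc E U P delta Pt.
  by move=> x a xH; exact: (proj1 (hch' (x, a) xH)).
pose W := fix W (m : nat) : X -> A -> R :=
  if m is m'.+1 then fun x a => Lp b (W m') (Pt x a) else fun _ _ => 0.
have hWV : forall m x a, x \in H -> W m x a <= Vn E U pi Pt m x a.
  elim=> [|m IH] x a xH; first by [].
  rewrite Vn_S /=.
  have pD := @adm_dist Pt hPt x a xH.
  apply: le_trans (_ : Lp b (Vn E U pi Pt m) (Pt x a) <= _).
    have := @LpLe b (W m) (Vn E U pi Pt m) (Pt x a) 0 pD b0 (lexx 0).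
    rewrite mulr0 addr0; apply => y a' yH; rewrite addr0; exact: IH.
  apply: Lp_mono_b => //; first exact: ltW.
  by move=> y a' yH; case/andP: (@Vn_b Pt m (@adm_dist Pt hPt) y a' yH).
have hgW : forall m x a, x \in H -> g x a <= W m x a + eta / (1 - b) + b ^+ m.
  elim=> [|m IH] x a xH.
    rewrite /= expr0 add0r; case/andP: (hg x a xH) => _ g1.
    have : 0 <= eta / (1 - b) by rewrite etaE; lra.
    lra.
  have [pD hp] := hch' (x, a) xH; rewrite /= -/(Pt x a) in pD hp.
  have h0 : 0 <= eta / (1 - b) + b ^+ m.
    by rewrite etaE; have := exprn_ge0 m b0; lra.
  have := @LpLe b g (W m) (Pt x a) _ (proj1 pD) b0 h0.
  have HH : forall y a', y \in H -> g y a' <= W m y a' + (eta / (1 - b) + b ^+ m).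
    by move=> y a' yH; rewrite addrA; exact: IH.
  move/(_ HH) => hL /=.
  have -> : b ^+ m.+1 = b * b ^+ m by rewrite exprS.
  have : eta + b * (eta / (1 - b)) = eta / (1 - b) by field; lra.
  lra.
have [m hm] := @pow_small b (e / 2) b0 b1 (divr_gt0 e0 (ltr0Sn _ 1)).
have := hgW m x0 a0 x0H; have := hWV m x0 a0 x0H; have := @q_ub x0 a0 Pt m x0H hPt.
rewrite etaE; lra.
Qed.


Fixpoint u (b : R) (k : nat) : X -> A -> R :=
  if k is k'.+1 then fun x a => if x \in H then T b (u b k') x a else 0
  else fun _ _ => 0.

Lemma u_b b k : 0 <= b <= 1 -> forall y a', y \in H -> 0 <= u b k y a' <= 1.
Proof.
move=> hb; elim: k => [|k IH] y a' yH; first by rewrite /= lexx ler01.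
by rewrite /= yH; apply: T_b.
Qed.

Lemma u_mono1 b k : 0 <= b <= 1 -> forall y a', y \in H -> u b k y a' <= u b k.+1 y a'.
Proof.
move=> hb; elim: k => [|k IH] y a' yH.
  by rewrite /= yH; case/andP: (@T_b b (u b 0) y a' yH hb (@u_b b 0 hb)).
rewrite /= yH; apply: T_mono => //; first exact: (@u_b b k.+1 hb).
Qed.

Lemma u_mono b m n : 0 <= b <= 1 -> (m <= n)%N ->
  forall y a', y \in H -> u b m y a' <= u b n y a'.
Proof.
move=> hb /subnK <-; elim: (n - m)%N => [|k IH] y a' yH; first by rewrite add0n.
apply: le_trans (IH y a' yH) _; rewrite addSn; exact: u_mono1.
Qed.

Lemma u_le_q b k : 0 <= b -> b < 1 -> forall y a', y \in H -> u b k y a' <= q y a'.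
Proof.
move=> b0 b1; have hb : 0 <= b <= 1 by rewrite b0 ltW.
apply: (@disc_le b (u b k) b0 b1 (@u_b b k hb)).
move=> y a' yH; have := @u_mono1 b k hb y a' yH; by rewrite /= yH.
Qed.

Lemma u_scale b k : 0 <= b <= 1 -> forall x a, x \in H -> b ^+ k * u 1 k x a <= u b k x a.
Proof.
move=> hb; have h1 : 0 <= (1:R) <= 1 by rewrite ler01 lexx.
have /andP [b0 b1] := hb.
elim: k => [|k IH] x a xH; first by rewrite /= mulr0.
rewrite /= xH.
have hbk : 0 <= b ^+ k <= 1 by rewrite exprn_ge0 // exprn_ile1.
have hh : forall y a', y \in H -> 0 <= b ^+ k * u 1 k y a' <= 1.
  move=> y a' yH; have /andP [u0 u1] := @u_b 1 k h1 y a' yH.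
  have /andP [c0 c1] := hbk.
  apply/andP; split; first exact: mulr_ge0.
  by rewrite -[leRHS]mulr1; apply: ler_pM.
apply: le_trans (_ : T b (fun y a' => b ^+ k * u 1 k y a') x a <= _); last first.
  apply: T_mono => //; first exact: (@u_b b k hb).
apply/ler_addgt0Pr => e e0.
have [p [pD hp]] := @T_adh 1 (u 1 k) x a xH h1 (@u_b 1 k h1) e e0.
have := @Lp_scale b (b ^+ k) (u 1 k) p (proj1 pD) hb hbk.
have HH : forall y a', y \in H -> 0 <= u 1 k y a'.
  by move=> y a' yH; case/andP: (@u_b 1 k h1 y a' yH).
move/(_ HH) => hs.
have ht := @T_ub b (fun y a' => b ^+ k * u 1 k y a') x a xH hb hh p pD.
have hbk1 : 0 <= b ^+ k.+1 <= 1 by rewrite exprn_ge0 // exprn_ile1.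
rewrite exprS.
have : b * b ^+ k * (T 1 (u 1 k) x a - e) <= b * b ^+ k * Lp 1 (u 1 k) p.
  by apply: ler_wpM2l; [apply: mulr_ge0 => //; case/andP: hbk | apply: ltW].
move: hbk1; rewrite exprS => /andP [c0 c1].
nra.
Qed.

Lemma u1_le_q k : forall x a, x \in H -> u 1 k x a <= q x a.
Proof.
move=> x a xH; apply/ler_addgt0Pr => e e0.
have h1 : 0 <= (1:R) <= 1 by rewrite ler01 lexx.
have k0 : 0 <= k%:R :> R by apply: ler0n.
pose y := e / (e + k%:R + 1).
have y0 : 0 <= y by apply: divr_ge0; lra.
have y1 : y < 1 by rewrite ltr_pdivrMr; lra.
have ky : k%:R * y <= e.
  by rewrite /y mulrA ler_pdivrMr; nra.
pose b := 1 - y.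
have hb : 0 <= b <= 1 by rewrite /b; apply/andP; split; lra.
have hbern := @bern2 y k y0 (ltW y1).
have hs := @u_scale b k hb x a xH.
have hq := @u_le_q b k (proj1 (andP hb)) (_ : b < 1) x a xH.
have /andP [u0 u1] := @u_b 1 k h1 x a xH.
have hb1 : b < 1.
  rewrite /b; suff : 0 < y by lra.
  by apply: divr_gt0; lra.
have {}hq := hq hb1.
have h2 : (1 - e) * u 1 k x a <= b ^+ k * u 1 k x a.
  by apply: ler_wpM2r => //; rewrite /b; lra.
have h3 : e * u 1 k x a <= e by rewrite ler_piMr //; lra.
lra.
Qed.

Lemma V_le_u1 Pt n : admissible loc E U P delta Pt ->
  forall x a, x \in H -> Vn E U pi Pt n x a <= u 1 n x a.
Proof.
move=> hPt; have h1 : 0 <= (1:R) <= 1 by rewrite ler01 lexx.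
elim: n => [|n IH] x a xH; first by [].
rewrite Vn_S /= xH.
have pD := hPt x a xH.
apply: le_trans (@T_ub 1 (u 1 n) x a xH h1 (@u_b 1 n h1) _ pD).
have := @LpLe 1 (Vn E U pi Pt n) (u 1 n) (Pt x a) 0 (proj1 pD) ler01 (lexx 0).
rewrite mulr0 addr0; apply => y a' yH; rewrite addr0; exact: IH.
Qed.

Lemma q_unif e : 0 < e -> exists K, forall y a', y \in H -> q y a' <= u 1 K y a' + e.
Proof.
move=> e0; have h1 : 0 <= (1:R) <= 1 by rewrite ler01 lexx.
have hch : forall ya : X * A, exists n : nat, ya.1 \in H -> q ya.1 ya.2 - e < u 1 n ya.1 ya.2.
  move=> [y a'] /=; case yH : (y \in H); last by exists 0%N.
  have [Pt [n [hPt hn]]] := @q_adh y a' e yH e0.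
  exists n => _; apply: lt_le_trans hn _; exact: V_le_u1.
have [N hN] := choice hch.
exists (\max_(ya : X * A) N ya) => y a' yH.
have := hN (y, a') yH => /= hl.
have := @u_mono 1 (N (y, a')) (\max_(ya : X * A) N ya) h1 (leq_bigmax (y, a')) y a' yH.
lra.
Qed.

Lemma bellman x a p : x \in H -> Dset x a p -> Lp 1 q p <= q x a.
Proof.
move=> xH pD; apply/ler_addgt0Pr => e e0.
have h1 : 0 <= (1:R) <= 1 by rewrite ler01 lexx.
have [K hK] := @q_unif e e0.
have := @LpLe 1 q (u 1 K) p e (proj1 pD) ler01 (ltW e0) hK.
have := @T_ub 1 (u 1 K) x a xH h1 (@u_b 1 K h1) p pD.
have := @u1_le_q K.+1 x a xH; rewrite /= xH.
lra.
Qed.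


Definition ff l := cost R U l + \sum_a' q l a' * pi l a'.

Lemma q_nH y a' : y \notin H -> q y a' = 0.
Proof. by rewrite /q => /negbTE ->. Qed.

Lemma Lp1q p : Lp 1 q p = \sum_l p l * ff l.
Proof.
apply: eq_bigr => l _; congr (_ * _); rewrite /Gb /ff; case: ifP => lH.
  by rewrite mul1r; congr (_ + _); apply: eq_bigr => a' _; rewrite mulrC.
rewrite big1 // => a' _; rewrite q_nH ?mul0r //; by rewrite lH.
Qed.

Lemma ff_ge0 l : 0 <= ff l.
Proof.
rewrite /ff; apply: addr_ge0; first by case/andP: (cost_b l).
apply: sumr_ge0 => a' _; apply: mulr_ge0; first by case/andP: (q_b l a').
by case: (hpi l).
Qed.

Lemma sum_eq1 (c : X) (g : X -> R) : \sum_l g l * (c == l)%:R = g c.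
Proof.
rewrite (bigD1 c) //= eqxx mulr1 big1 ?addr0 // => l /negbTE.
by rewrite eq_sym => ->; rewrite mulr0.
Qed.

Lemma mix_sum (w th : R) (c1 c2 : X) (g : X -> R) :
  \sum_l (w * (th * (c1 == l)%:R + (1 - th) * (c2 == l)%:R)) * g l =
  w * (th * g c1 + (1 - th) * g c2).
Proof.
rewrite (eq_bigr (fun l => (w * th * g l) * (c1 == l)%:R + (w * (1 - th) * g l) * (c2 == l)%:R)); last first.
  by move=> l _; ring.
rewrite big_split /= !sum_eq1; ring.
Qed.

Lemma main x a : x \in H ->
  Qrob loc E U P pi delta x a = dualValue loc E U P pi delta x a.
Proof.
move=> xH; rewrite Qrob_q /dualValue.
have conv : forall (lam : R) (h : X -> R) y l,
   (((- lam * `|loc l - loc y| + cost R U l)%:E +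
    (\sum_a' (Qrob loc E U P pi delta l a' * (pi l a')%:E)%E)%R <= (h y)%:E)%E) =
   (ff l - lam * dd l y <= h y).
  move=> lam h y l.
  rewrite (eq_bigr (fun a' => (q l a' * pi l a')%:E)); last by move=> *; rewrite Qrob_q.
  rewrite -(big_morph EFin (id1 := 0%R) (op1 := +%R) EFinD erefl).
  rewrite -EFinD lee_fin /ff /dd; apply/idP/idP => H0; lra.
apply/eqP; rewrite eq_le; apply/andP; split.
  apply: le_ereal_inf_tmp => r [lam [h [l0 [hc ->]]]]; rewrite lee_fin.
  have hc' : forall l y, ff l - lam * dd l y <= h y by move=> l y; rewrite -conv.
  rewrite /q xH; apply: ge_sup; first by exists 0, P, 0%N; split => //; exact: adm_P.
  move=> r0 [Pt [[|n] [hPt ->]]].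
    apply: addr_ge0; first exact: mulr_ge0.
    apply: sumr_ge0 => y _; apply: mulr_ge0; last by case: (hP x a xH).
    by have := hc' y y; rewrite dd_xx mulr0 subr0; have := ff_ge0 y; lra.
  rewrite Vn_S; have pD := hPt x a xH.
  apply: le_trans (_ : Lp 1 q (Pt x a) <= _).
    have := @LpLe 1 (Vn E U pi Pt n) q (Pt x a) 0 (proj1 pD) ler01 (lexx 0).
    rewrite mulr0 addr0; apply => y a' yH; rewrite addr0; exact: q_ub.
  by rewrite Lp1q; apply: weak_dual.
apply: ge_ereal_inf.
pose C (s : {ffun X -> X}) := \sum_y P x a y * dd (s y) y.
pose F (s : {ffun X -> X}) := \sum_y P x a y * ff (s y).
have C0 : C [ffun y => y] <= delta.
  rewrite /C big1 // => y _; by rewrite ffunE dd_xx mulr0.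
have [i [j [th [lam [hth [hC [l0 hF]]]]]]] := @mix2D R _ C F delta _ C0.
have hmax : forall y, exists l, forall l', ff l' - lam * dd l' y <= ff l - lam * dd l y.
  move=> y; have [l [_ hl]] := @exmax R X predT (fun l => ff l - lam * dd l y) y isT.
  by exists l => l'; apply: hl.
have [t0 ht0] := choice hmax.
pose tau := [ffun y => t0 y].
pose h y := ff (tau y) - lam * dd (tau y) y.
exists (lam * delta + \sum_y h y * P x a y)%:E.
  exists lam, h; split => //; split => // y l; rewrite conv /h ffunE; exact: ht0.
rewrite lee_fin.
have [p0 p1] := hP x a xH.
have /andP [th0 th1] := hth.
pose p l := \sum_y P x a y * (th * (i y == l)%:R + (1 - th) * (j y == l)%:R).
have psum : forall g : X -> R, \sum_l p l * g l = \sum_y P x a y * (th * g (i y) + (1 - th) * g (j y)).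
  move=> g; rewrite /p.
  rewrite (eq_bigr (fun l => \sum_y (P x a y * (th * (i y == l)%:R + (1 - th) * (j y == l)%:R)) * g l)); last first.
    by move=> l _; rewrite mulr_suml.
  rewrite exchange_big /=; apply: eq_bigr => y _; exact: mix_sum.
have pD : Dset x a p.
  split; first split.
  - move=> l; apply: sumr_ge0 => y _; apply: mulr_ge0 => //.
    by apply: addr_ge0; apply: mulr_ge0; rewrite ?ler0n //; lra.
  - have e := psum (fun _ => 1).
    have -> : \sum_l p l = \sum_l p l * 1 by apply: eq_bigr => *; rewrite mulr1.
    rewrite e -[RHS]p1; apply: eq_bigr => y _; ring.
  - pose G l y := P x a y * (th * (i y == l)%:R + (1 - th) * (j y == l)%:R).
    apply: le_trans (@Wass_le p (P x a) G _) _.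
      split.
        move=> l y; apply: mulr_ge0 => //.
        by apply: addr_ge0; apply: mulr_ge0; rewrite ?ler0n //; lra.
      split => // y.
      have e := mix_sum (P x a y) th (i y) (j y) (fun _ => 1).
      have -> : \sum_l G l y = \sum_l G l y * 1 by apply: eq_bigr => *; rewrite mulr1.
      rewrite /G e; ring.
    rewrite /ccost exchange_big /=.
    rewrite (eq_bigr (fun y => P x a y * (th * dd (i y) y + (1 - th) * dd (j y) y))); last first.
      by move=> y _; rewrite -(mix_sum _ _ _ _ (fun l => dd l y)).
    apply: le_trans hC; rewrite le_eqVlt; apply/orP; left; apply/eqP.
    rewrite /C !mulr_sumr -big_split /=; apply: eq_bigr => y _; ring.
apply: le_trans (@bellman x a p xH pD) ; rewrite Lp1q psum.
have e1 : \sum_y h y * P x a y = F tau - lam * C tau.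
  rewrite /F /C mulr_sumr -sumrB; apply: eq_bigr => y _; rewrite /h; ring.
have e2 : \sum_y P x a y * (th * ff (i y) + (1 - th) * ff (j y)) = th * F i + (1 - th) * F j.
  rewrite /F !mulr_sumr -big_split /=; apply: eq_bigr => y _; ring.
rewrite e1 e2; have := hF tau; lra.
Qed.

End Main.


Local Close Scope classical_set_scope.

Theorem mainTheorem5 (R : realType) (X A : finType) (loc : X -> R)
  (E U : {set X}) (P : X -> A -> X -> R) (pi : X -> A -> R) (delta : R) :
  injective loc ->
  [disjoint E & U] ->
  0 <= delta ->
  (forall x a, x \in Hset E U -> isDist (P x a)) ->
  (forall x, isDist (pi x)) ->
  forall x a, x \in Hset E U ->
    Qrob loc E U P pi delta x a = dualValue loc E U P pi delta x a.
Proof.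
move=> _ _ hd hP hpi x a xH.
exact: (@main R X A loc E U P pi delta hd hP hpi x a xH).
Qed.
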